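(* Let $A_0$ and $A_1$ be (possibly unbounded) closed densely defined operators on Hilbert spaces $\mathfrak H_0$ and $\mathfrak H_1$. Let $\delta>0$, and assume the Sylvester operator is boundedly invertible with norm bound $1/\delta$, in the following sense: for every $Y\in\mathcal B(\mathfrak H_0,\mathfrak H_1)$ there is a unique $X\in\mathcal B(\mathfrak H_0,\mathfrak H_1)$ with $X(\mathrm{Dom}(A_0))\subset\mathrm{Dom}(A_1)$ and $XA_0x-A_1Xx=Yx$ for all $x\in\mathrm{Dom}(A_0)$, and this $X$ satisfies $\|X\|\le\|Y\|/\delta$. Let $B\in\mathcal B(\mathfrak H_1,\mathfrak H_0)$ and $C\in\mathcal B(\mathfrak H_0,\mathfrak H_1)$ satisfy $\sqrt{\|B\|\,\|C\|}<\delta/2$. Then the Riccati equation $KA_0-A_1K+KBK=C$ has a unique strong solution $K$ in the closed ball $\{K\in\mathcal B(\mathfrak H_0,\mathfrak H_1):\|K\|\le \delta/(2\|B\|)\}$; when $B=0$ this ball is the whole space $\mathcal B(\mathfrak H_0,\mathfrak H_1)$. This solution satisfies $$\|K\|\le\frac{\|C\|}{\frac{\delta}{2}+\sqrt{\frac{\delta^2}{4}-\|B\|\,\|C\|}}.$$ For $B\ne0$ the right-hand side equals $\sqrt{\|C\|/\|B\|}\,\tanh\!\Bigl(\tfrac12\operatorname{arctanh}\tfrac{2\sqrt{\|B\|\|C\|}}{\delta}\Bigr)$.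
   Context: $\mathcal B(\mathfrak M,\mathfrak N)$ denotes the bounded linear operators from $\mathfrak M$ to $\mathfrak N$. An operator $K\in\mathcal B(\mathfrak H_0,\mathfrak H_1)$ is a strong solution of the Riccati equation $KA_0-A_1K+KBK=C$ if $K(\mathrm{Dom}(A_0))\subset\mathrm{Dom}(A_1)$ and $KA_0x-A_1Kx+KBKx=Cx$ for all $x\in\mathrm{Dom}(A_0)$. *)

(* Defs.v *)
From Stdlib Require Import Reals ClassicalEpsilon.
Open Scope R_scope.

Record Cplx := mkC { Cre : R; Cim : R }.
Definition C0 : Cplx := mkC 0 0.
Definition C1 : Cplx := mkC 1 0.
Definition Cadd (a b : Cplx) : Cplx := mkC (Cre a + Cre b) (Cim a + Cim b).
Definition Cmul (a b : Cplx) : Cplx :=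
  mkC (Cre a * Cre b - Cim a * Cim b) (Cre a * Cim b + Cim a * Cre b).
Definition Cconj (a : Cplx) : Cplx := mkC (Cre a) (- Cim a).

Record HilbertSpace := {
  hcar :> Type;
  hzero : hcar;
  hadd : hcar -> hcar -> hcar;
  hopp : hcar -> hcar;
  hscal : Cplx -> hcar -> hcar;
  hinner : hcar -> hcar -> Cplx;
  hadd_assoc : forall x y z, hadd x (hadd y z) = hadd (hadd x y) z;
  hadd_comm : forall x y, hadd x y = hadd y x;
  hadd_0l : forall x, hadd hzero x = x;
  hadd_oppl : forall x, hadd (hopp x) x = hzero;
  hscal_1 : forall x, hscal C1 x = x;
  hscal_mul : forall a b x, hscal (Cmul a b) x = hscal a (hscal b x);
  hscal_addv : forall a x y, hscal a (hadd x y) = hadd (hscal a x) (hscal a y);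
  hscal_adds : forall a b x, hscal (Cadd a b) x = hadd (hscal a x) (hscal b x);
  hinner_addl : forall x y z, hinner (hadd x y) z = Cadd (hinner x z) (hinner y z);
  hinner_scall : forall a x y, hinner (hscal a x) y = Cmul a (hinner x y);
  hinner_sym : forall x y, hinner y x = Cconj (hinner x y);
  hinner_pos : forall x, 0 <= Cre (hinner x x);
  hinner_def : forall x, Cre (hinner x x) = 0 -> x = hzero;
  hcomplete : forall u : nat -> hcar,
    (forall eps, 0 < eps -> exists N, forall m n, (N <= m)%nat -> (N <= n)%nat ->
        sqrt (Cre (hinner (hadd (u m) (hopp (u n))) (hadd (u m) (hopp (u n))))) < eps) ->
    exists l, forall eps, 0 < eps -> exists N, forall n, (N <= n)%nat ->
        sqrt (Cre (hinner (hadd (u n) (hopp l)) (hadd (u n) (hopp l)))) < eps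
}.

Arguments hzero {h}. Arguments hadd {h}. Arguments hopp {h}.
Arguments hscal {h}. Arguments hinner {h}.

Definition hsub {H : HilbertSpace} (x y : H) : H := hadd x (hopp y).
Definition hnorm {H : HilbertSpace} (x : H) : R := sqrt (Cre (hinner x x)).

Definition linear_map {H0 H1 : HilbertSpace} (f : H0 -> H1) : Prop :=
  (forall x y, f (hadd x y) = hadd (f x) (f y)) /\
  (forall a x, f (hscal a x) = hscal a (f x)).

Definition bounded_op {H0 H1 : HilbertSpace} (f : H0 -> H1) : Prop :=
  linear_map f /\ exists M, forall x, hnorm (f x) <= M * hnorm x.

(* operator norm: sup { ||f x|| : ||x|| <= 1 } (chosen by epsilon; it is the
   least upper bound whenever that exists, in particular for bounded f) *)
Definition opnorm_spec {H0 H1 : HilbertSpace} (f : H0 -> H1) (r : R) : Prop :=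
  is_lub (fun t => exists x, hnorm x <= 1 /\ t = hnorm (f x)) r.
Definition opnorm {H0 H1 : HilbertSpace} (f : H0 -> H1) : R :=
  epsilon (inhabits 0) (opnorm_spec f).

Definition closed_densely_defined {H : HilbertSpace} (D : H -> Prop) (A : H -> H) : Prop :=
  D hzero /\ (forall x y, D x -> D y -> D (hadd x y)) /\
  (forall a x, D x -> D (hscal a x)) /\
  (forall x y, D x -> D y -> A (hadd x y) = hadd (A x) (A y)) /\
  (forall a x, D x -> A (hscal a x) = hscal a (A x)) /\
  (forall x eps, 0 < eps -> exists y, D y /\ hnorm (hsub x y) < eps) /\
  (forall (u : nat -> H) x y, (forall n, D (u n)) ->
     (forall eps, 0 < eps -> exists N, forall n, (N <= n)%nat -> hnorm (hsub (u n) x) < eps) ->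
     (forall eps, 0 < eps -> exists N, forall n, (N <= n)%nat -> hnorm (hsub (A (u n)) y) < eps) ->
     D x /\ A x = y).

Definition sylvester_strong_sol {H0 H1 : HilbertSpace}
  (D0 : H0 -> Prop) (A0 : H0 -> H0) (D1 : H1 -> Prop) (A1 : H1 -> H1)
  (Y X : H0 -> H1) : Prop :=
  (forall x, D0 x -> D1 (X x)) /\
  (forall x, D0 x -> hsub (X (A0 x)) (A1 (X x)) = Y x).

Definition riccati_strong_sol {H0 H1 : HilbertSpace}
  (D0 : H0 -> Prop) (A0 : H0 -> H0) (D1 : H1 -> Prop) (A1 : H1 -> H1)
  (B : H1 -> H0) (C : H0 -> H1) (K : H0 -> H1) : Prop :=
  (forall x, D0 x -> D1 (K x)) /\
  (forall x, D0 x -> hadd (hsub (K (A0 x)) (A1 (K x))) (K (B (K x))) = C x).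

Definition arctanh (x : R) : R := ln ((1 + x) / (1 - x)) / 2.

(* Main.v *)
Require Import Defs.
From Stdlib Require Import Reals Lra Lia Psatz ClassicalEpsilon Classical FunctionalExtensionality.
Open Scope R_scope.
Arguments hadd_assoc {h}. Arguments hadd_comm {h}. Arguments hadd_0l {h}. Arguments hadd_oppl {h}.
Arguments hscal_1 {h}. Arguments hscal_mul {h}. Arguments hscal_addv {h}. Arguments hscal_adds {h}.
Arguments hinner_addl {h}. Arguments hinner_scall {h}. Arguments hinner_sym {h}. Arguments hinner_pos {h}. Arguments hinner_def {h}. Arguments hcomplete {h}.

Section G.
Variable H : HilbertSpace.
Implicit Types x y z a b c d u v : H.

Lemma addr0 x : hadd x hzero = x.
Proof. rewrite hadd_comm; apply hadd_0l. Qed.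
Lemma addrN x : hadd x (hopp x) = hzero.
Proof. rewrite hadd_comm; apply hadd_oppl. Qed.
Lemma opp_uniq a x : hadd a x = hzero -> a = hopp x.
Proof. intro E. rewrite <- (addr0 a), <- (addrN x), hadd_assoc, E, hadd_0l. reflexivity. Qed.
Lemma oppK x : hopp (hopp x) = x.
Proof. symmetry; apply opp_uniq; apply addrN. Qed.
Lemma addACA a b c d : hadd (hadd a b) (hadd c d) = hadd (hadd a c) (hadd b d).
Proof.
  rewrite <- !hadd_assoc. f_equal. rewrite !hadd_assoc. f_equal. apply hadd_comm.
Qed.
Lemma oppD x y : hopp (hadd x y) = hadd (hopp x) (hopp y).
Proof. symmetry; apply opp_uniq. rewrite addACA, !hadd_oppl, hadd_0l; reflexivity. Qed.
Lemma opp0 : hopp (@hzero H) = hzero.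
Proof. symmetry; apply opp_uniq. apply hadd_0l. Qed.
Lemma subKr c a b : hsub (hsub c a) (hsub c b) = hsub b a.
Proof.
  unfold hsub. rewrite oppD, oppK, addACA, addrN, hadd_0l, hadd_comm. reflexivity.
Qed.
Lemma subACA a b c d : hsub (hsub a b) (hsub c d) = hsub (hsub a c) (hsub b d).
Proof. unfold hsub. rewrite !oppD, !oppK, addACA. reflexivity. Qed.
Lemma subDD a b c d : hsub (hadd a b) (hadd c d) = hadd (hsub a c) (hsub b d).
Proof. unfold hsub. rewrite oppD, addACA. reflexivity. Qed.
Lemma subK c k : hadd (hsub c k) k = c.
Proof. unfold hsub. rewrite <- hadd_assoc, hadd_oppl, addr0. reflexivity. Qed.
Lemma sub_trans a b c : hsub a c = hadd (hsub a b) (hsub b c).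
Proof. unfold hsub. rewrite <- hadd_assoc, (hadd_assoc (hopp b)), hadd_oppl, hadd_0l. reflexivity. Qed.
Lemma sub_sym a b : hsub b a = hopp (hsub a b).
Proof. unfold hsub. rewrite oppD, oppK, hadd_comm. reflexivity. Qed.
Lemma subrr a : hsub a a = hzero.
Proof. apply addrN. Qed.

Lemma scal_0 (a : Cplx) : hscal a (@hzero H) = hzero.
Proof.
  assert (E : hadd (hscal a (@hzero H)) (hscal a hzero) = hadd (hscal a hzero) hzero).
  { rewrite <- hscal_addv, hadd_0l, addr0. reflexivity. }
  assert (F: forall p q r : H, hadd p q = hadd p r -> q = r).
  { intros p q r E'. rewrite <- (hadd_0l q), <- (hadd_0l r), <- (hadd_oppl p), <- !hadd_assoc, E'. reflexivity. }
  exact (F _ _ _ E).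
Qed.
Lemma scal_opp (a : Cplx) x : hscal a (hopp x) = hopp (hscal a x).
Proof. apply opp_uniq. rewrite <- hscal_addv, hadd_oppl. apply scal_0. Qed.
Lemma scal_sub (a : Cplx) x y : hscal a (hsub x y) = hsub (hscal a x) (hscal a y).
Proof. unfold hsub. rewrite hscal_addv, scal_opp. reflexivity. Qed.
Lemma opp_scal x : hopp x = hscal (mkC (-1) 0) x.
Proof.
  symmetry. apply opp_uniq. rewrite <- (hscal_1 x) at 2. rewrite <- hscal_adds.
  unfold Cadd, C1; simpl. replace (-1+1) with 0 by ring. replace (0+0) with 0 by ring.
  assert (E: hscal (mkC 0 0) x = hadd (hscal (mkC 0 0) x) (hscal (mkC 0 0) x)).
  { rewrite <- hscal_adds. unfold Cadd; simpl. rewrite Rplus_0_r. reflexivity. }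
  rewrite <- (addr0 (hscal (mkC 0 0) x)) in E at 1.
  assert (F: forall p q r : H, hadd p q = hadd p r -> q = r).
  { intros p q r E'. rewrite <- (hadd_0l q), <- (hadd_0l r), <- (hadd_oppl p), <- !hadd_assoc, E'. reflexivity. }
  symmetry; exact (F _ _ _ E).
Qed.
End G.


Section N.
Variable H : HilbertSpace.
Implicit Types x y z u v : H.

Lemma im_self x : Cim (hinner x x) = 0.
Proof. pose proof (hinner_sym x x) as E. destruct (hinner x x) as [p q]. unfold Cconj in E; simpl in *. injection E. lra. Qed.
Lemma re_sym x y : Cre (hinner y x) = Cre (hinner x y).
Proof. rewrite hinner_sym. reflexivity. Qed.
Lemma reDl x y z : Cre (hinner (hadd x y) z) = Cre (hinner x z) + Cre (hinner y z).
Proof. rewrite hinner_addl. reflexivity. Qed.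
Lemma reDr x y z : Cre (hinner z (hadd x y)) = Cre (hinner z x) + Cre (hinner z y).
Proof. rewrite (re_sym (hadd x y) z), (re_sym x z), (re_sym y z). apply reDl. Qed.
Lemma reZl t x y : Cre (hinner (hscal (mkC t 0) x) y) = t * Cre (hinner x y).
Proof. rewrite hinner_scall. unfold Cmul; simpl. ring. Qed.
Lemma reZr t x y : Cre (hinner y (hscal (mkC t 0) x)) = t * Cre (hinner y x).
Proof. rewrite re_sym, reZl, re_sym. reflexivity. Qed.

Lemma hnorm_nonneg x : 0 <= hnorm x.
Proof. apply sqrt_pos. Qed.
Lemma hnorm_sq x : hnorm x * hnorm x = Cre (hinner x x).
Proof. apply sqrt_sqrt, hinner_pos. Qed.
Lemma hnorm_eq0 x : hnorm x = 0 -> x = hzero.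
Proof. intro E. apply hinner_def. apply sqrt_eq_0; [apply hinner_pos|exact E]. Qed.
Lemma hnorm_le0 x : hnorm x <= 0 -> x = hzero.
Proof. intro E. apply hnorm_eq0. pose proof (hnorm_nonneg x). lra. Qed.

Lemma hnorm_scal a x : hnorm (hscal a x) = sqrt (Cre a * Cre a + Cim a * Cim a) * hnorm x.
Proof.
  unfold hnorm. rewrite <- sqrt_mult_alt by nra. f_equal.
  rewrite hinner_scall. rewrite (hinner_sym (hscal a x) x), hinner_scall.
  pose proof (im_self x) as I. destruct a as [p q]. destruct (hinner x x) as [n m].
  unfold Cmul, Cconj; simpl in *. subst m. ring.
Qed.
Lemma hnorm_scalR t x : hnorm (hscal (mkC t 0) x) = Rabs t * hnorm x.
Proof. rewrite hnorm_scal; simpl. rewrite Rmult_0_r, Rplus_0_r. rewrite <- (sqrt_Rsqr_abs t). reflexivity. Qed.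
Lemma hnorm_opp x : hnorm (hopp x) = hnorm x.
Proof. rewrite opp_scal, hnorm_scalR. replace (Rabs (-1)) with 1. ring. rewrite Rabs_left by lra. ring. Qed.
Lemma hnorm_subC x y : hnorm (hsub x y) = hnorm (hsub y x).
Proof. rewrite (sub_sym _ y x), hnorm_opp. reflexivity. Qed.
Lemma hnorm_zero : hnorm (@hzero H) = 0.
Proof. rewrite <- (scal_0 H (mkC 0 0)), hnorm_scalR, Rabs_R0. ring. Qed.

Lemma cs_re x y : Cre (hinner x y) <= hnorm x * hnorm y.
Proof.
  set (a := Cre (hinner x x)). set (d := Cre (hinner y y)). set (p := Cre (hinner x y)).
  assert (Q : forall t, 0 <= a + 2 * t * p + t * t * d).
  { intro t. pose proof (hinner_pos (hadd x (hscal (mkC t 0) y))) as P.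
    rewrite reDl, !reDr, !reZl, !reZr, (re_sym x y) in P. unfold a, d, p. lra. }
  assert (Ha : 0 <= a) by apply hinner_pos. assert (Hd : 0 <= d) by apply hinner_pos.
  assert (S : p * p <= a * d).
  { destruct (Req_dec d 0) as [D0|D0].
    - destruct (Req_dec p 0) as [P0|P0]. + rewrite P0, D0; lra.
      + exfalso. specialize (Q (- (a + 1) / (2 * p))). rewrite D0 in Q.
        replace (a + 2 * (- (a + 1) / (2 * p)) * p + - (a + 1) / (2 * p) * (- (a + 1) / (2 * p)) * 0) with (-1) in Q by (field; auto). lra.
    - specialize (Q (- p / d)).
      replace (a + 2 * (- p / d) * p + - p / d * (- p / d) * d) with ((a * d - p * p) / d) in Q by (field; auto).
      assert (0 < d) by lra. apply Rmult_le_compat_r with (r := d) in Q; [|lra].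
      unfold Rdiv in Q. rewrite Rmult_assoc, Rinv_l in Q by lra. lra. }
  pose proof (hnorm_sq x) as Sx. pose proof (hnorm_sq y) as Sy. fold a in Sx. fold d in Sy.
  pose proof (hnorm_nonneg x). pose proof (hnorm_nonneg y).
  assert (0 <= hnorm x * hnorm y) by nra.
  destruct (Rle_dec p 0). nra.
  assert (p * p <= (hnorm x * hnorm y) * (hnorm x * hnorm y)) by nra. nra.
Qed.

Lemma hnorm_tri x y : hnorm (hadd x y) <= hnorm x + hnorm y.
Proof.
  pose proof (cs_re x y). pose proof (hnorm_sq x). pose proof (hnorm_sq y).
  pose proof (hnorm_sq (hadd x y)) as S. rewrite reDl, !reDr, (re_sym x y) in S.
  pose proof (hnorm_nonneg x). pose proof (hnorm_nonneg y). pose proof (hnorm_nonneg (hadd x y)).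
  nra.
Qed.
Lemma hnorm_sub_tri (a b c : H) : hnorm (hsub a c) <= hnorm (hsub a b) + hnorm (hsub b c).
Proof. rewrite (sub_trans _ a b c). apply hnorm_tri. Qed.
End N.


Definition bnd {H0 H1 : HilbertSpace} (f : H0 -> H1) (M : R) : Prop :=
  forall x, hnorm (f x) <= M * hnorm x.

Lemma addl_cancel (H : HilbertSpace) (p q r : H) : hadd p q = hadd p r -> q = r.
Proof. intros E'. rewrite <- (hadd_0l q), <- (hadd_0l r), <- (hadd_oppl p), <- !hadd_assoc, E'. reflexivity. Qed.

Section O.
Context {H0 H1 H2 : HilbertSpace}.

Lemma lin_zero (f : H0 -> H1) : linear_map f -> f hzero = hzero.
Proof.
  intros [Ha _]. apply (addl_cancel _ (f hzero)). rewrite <- Ha, hadd_0l, addr0. reflexivity.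
Qed.
Lemma lin_opp (f : H0 -> H1) x : linear_map f -> f (hopp x) = hopp (f x).
Proof. intros [Ha Hs]. rewrite !opp_scal, Hs. reflexivity. Qed.
Lemma lin_sub (f : H0 -> H1) x y : linear_map f -> f (hsub x y) = hsub (f x) (f y).
Proof. intros L. unfold hsub. rewrite (proj1 L), lin_opp by exact L. reflexivity. Qed.

Lemma bnd_ext (f g : H0 -> H1) M : (forall x, f x = g x) -> bnd f M -> bnd g M.
Proof. intros E B x. rewrite <- E. apply B. Qed.

Lemma bounded_bnd (f : H0 -> H1) : bounded_op f -> exists M, 0 <= M /\ bnd f M.
Proof.
  intros [_ [M HM]]. exists (Rabs M). split. apply Rabs_pos. intro x.
  pose proof (HM x). pose proof (Rle_abs M). pose proof (hnorm_nonneg _ x). nra.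
Qed.

Lemma opnorm_spec_ok (f : H0 -> H1) : bounded_op f -> opnorm_spec f (opnorm f).
Proof.
  intro Bf. unfold opnorm. apply epsilon_spec.
  destruct (bounded_bnd f Bf) as [M [HM0 HM]].
  destruct (completeness (fun t => exists x, hnorm x <= 1 /\ t = hnorm (f x))) as [m Hm].
  - exists M. intros t [x [Hx ->]]. pose proof (HM x). pose proof (hnorm_nonneg _ x). nra.
  - exists (hnorm (f hzero)). exists hzero. split; [rewrite hnorm_zero; lra|reflexivity].
  - exists m; exact Hm.
Qed.

Lemma opnorm_nonneg (f : H0 -> H1) : bounded_op f -> 0 <= opnorm f.
Proof.
  intro Bf. destruct (opnorm_spec_ok f Bf) as [U _]. apply U. exists hzero.
  rewrite lin_zero by apply Bf. rewrite !hnorm_zero. split; lra.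
Qed.

Lemma opnorm_le (f : H0 -> H1) M : bounded_op f -> 0 <= M -> bnd f M -> opnorm f <= M.
Proof.
  intros Bf HM B. destruct (opnorm_spec_ok f Bf) as [_ L]. apply L.
  intros t [x [Hx ->]]. pose proof (B x). pose proof (hnorm_nonneg _ x). nra.
Qed.

Lemma bnd_opnorm (f : H0 -> H1) : bounded_op f -> bnd f (opnorm f).
Proof.
  intros Bf x. destruct (opnorm_spec_ok f Bf) as [U _].
  destruct (Req_dec (hnorm x) 0) as [Z|Z].
  - rewrite (hnorm_eq0 _ x Z), lin_zero by apply Bf. rewrite !hnorm_zero. lra.
  - pose proof (hnorm_nonneg _ x). set (t := / hnorm x).
    assert (Ht : 0 < t) by (apply Rinv_0_lt_compat; lra).
    assert (N1 : hnorm (hscal (mkC t 0) x) = 1).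
    { rewrite hnorm_scalR, Rabs_pos_eq by lra. unfold t. field. auto. }
    assert (Q := U _ (ex_intro _ (hscal (mkC t 0) x) (conj (Req_le _ _ N1) eq_refl))).
    simpl in Q. rewrite (proj2 (proj1 Bf)), hnorm_scalR, Rabs_pos_eq in Q by lra.
    unfold t in Q. apply Rmult_le_compat_r with (r := hnorm x) in Q; [|lra].
    rewrite Rmult_comm, <- Rmult_assoc, Rinv_r, Rmult_1_l in Q by auto. lra.
Qed.

Lemma bounded_of_bnd (f : H0 -> H1) M : linear_map f -> bnd f M -> bounded_op f.
Proof. intros L B. split; [exact L|exists M; exact B]. Qed.

Lemma lin_sub_map (f g : H0 -> H1) : linear_map f -> linear_map g ->
  linear_map (fun x => hsub (f x) (g x)).
Proof.
  intros [Fa Fs] [Ga Gs]. split.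
  - intros x y. rewrite Fa, Ga. apply subDD.
  - intros a x. rewrite Fs, Gs, scal_sub. reflexivity.
Qed.
Lemma lin_comp (f : H1 -> H2) (g : H0 -> H1) : linear_map f -> linear_map g ->
  linear_map (fun x => f (g x)).
Proof.
  intros [Fa Fs] [Ga Gs]. split.
  - intros x y. rewrite Ga, Fa. reflexivity.
  - intros a x. rewrite Gs, Fs. reflexivity.
Qed.
Lemma bnd_sub (f g : H0 -> H1) M N : bnd f M -> bnd g N -> bnd (fun x => hsub (f x) (g x)) (M + N).
Proof.
  intros Bf Bg x. unfold hsub. eapply Rle_trans. apply hnorm_tri. rewrite hnorm_opp.
  pose proof (Bf x). pose proof (Bg x). lra.
Qed.
Lemma bnd_comp (f : H1 -> H2) (g : H0 -> H1) M N : 0 <= M -> bnd f M -> bnd g N ->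
  bnd (fun x => f (g x)) (M * N).
Proof.
  intros HM Bf Bg x. eapply Rle_trans. apply Bf. pose proof (Bg x). rewrite Rmult_assoc.
  apply Rmult_le_compat_l; auto.
Qed.
Lemma bounded_sub (f g : H0 -> H1) : bounded_op f -> bounded_op g -> bounded_op (fun x => hsub (f x) (g x)).
Proof.
  intros Bf Bg. destruct (bounded_bnd f Bf) as [M [_ HM]]. destruct (bounded_bnd g Bg) as [N [_ HN]].
  apply bounded_of_bnd with (M + N). apply lin_sub_map; [apply Bf|apply Bg]. apply bnd_sub; auto.
Qed.
Lemma bounded_zero : bounded_op (fun _ : H0 => @hzero H1).
Proof.
  apply bounded_of_bnd with 0. split.
  - intros; rewrite hadd_0l; reflexivity.
  - intros; rewrite scal_0; reflexivity.
  - intro x. rewrite hnorm_zero. lra.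
Qed.
End O.
Lemma bounded_comp {H0 H1 H2 : HilbertSpace} (f : H1 -> H2) (g : H0 -> H1) : bounded_op f -> bounded_op g -> bounded_op (fun x => f (g x)).
Proof.
  intros Bf Bg. destruct (bounded_bnd f Bf) as [M [HM0 HM]]. destruct (bounded_bnd g Bg) as [N [_ HN]].
  apply bounded_of_bnd with (M * N). apply lin_comp; [apply Bf|apply Bg]. apply bnd_comp; auto.
Qed.


Lemma pos_sq_eq m n : 0 < m -> 0 < n -> m * m = n * n -> m = n.
Proof. intros. nra. Qed.

Lemma cross a b c d : b <> 0 -> d <> 0 -> a * d = c * b -> a / b = c / d.
Proof. intros. field_simplify_eq; auto. lra. Qed.

Lemma tanh_half t : 0 <= t < 1 ->
  tanh (arctanh t / 2) = t / (1 + sqrt (1 - t * t)).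
Proof.
  intros [T0 T1]. unfold arctanh, tanh, sinh, cosh.
  set (w := (1 + t) / (1 - t)). set (u := ln w / 2 / 2).
  assert (Wp : 0 < w) by (unfold w; apply Rdiv_lt_0_compat; lra).
  set (v := exp u). assert (Vp : 0 < v) by apply exp_pos.
  rewrite exp_Ropp. fold v.
  set (m := v * v). assert (Mp : 0 < m) by (unfold m; nra).
  assert (M2 : m * m = w).
  { unfold m, v. rewrite <- !exp_plus. replace (u + u + (u + u)) with (ln w) by (unfold u; field).
    apply exp_ln; auto. }
  set (p := sqrt (1 - t * t)). assert (Pp : 0 < p) by (apply sqrt_lt_R0; nra).
  assert (P2 : p * p = 1 - t * t) by (apply sqrt_sqrt; nra).
  assert (Mv : m = (1 + t) / p).
  { apply pos_sq_eq; auto. apply Rdiv_lt_0_compat; lra.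
    rewrite M2. unfold w. replace ((1+t)/p*((1+t)/p)) with ((1+t)*(1+t)/(p*p)) by (field; lra).
    rewrite P2. field. split; nra. }
  replace ((v - / v) / 2 / ((v + / v) / 2)) with ((m - 1) / (m + 1)) by (unfold m; field; nra).
  rewrite Mv. replace (((1+t)/p - 1)/((1+t)/p + 1)) with ((1+t-p)/(1+t+p)) by (field; nra).
  apply cross; try nra.
Qed.

Lemma final_id b c delta : 0 < b -> 0 <= c -> 0 < delta -> b * c < delta ^ 2 / 4 ->
  c / (delta / 2 + sqrt (delta ^ 2 / 4 - b * c)) =
  sqrt (c / b) * tanh (arctanh (2 * sqrt (b * c) / delta) / 2).
Proof.
  intros Hb Hc Hd Hbc.
  set (s := sqrt (b * c)). assert (S0 : 0 <= s) by apply sqrt_pos.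
  assert (S2 : s * s = b * c) by (apply sqrt_sqrt; nra).
  set (t := 2 * s / delta).
  assert (T0 : 0 <= t) by (unfold t; apply Rmult_le_pos; [lra|left; apply Rinv_0_lt_compat; lra]).
  assert (T1 : t < 1).
  { unfold t. apply Rmult_lt_reg_r with delta; auto. unfold Rdiv. rewrite Rmult_assoc, Rinv_l by lra. nra. }
  rewrite tanh_half by lra.
  set (sq := sqrt (delta ^ 2 / 4 - b * c)).
  assert (Q0 : 0 < sq) by (apply sqrt_lt_R0; lra).
  assert (Q2 : sq * sq = delta ^ 2 / 4 - b * c) by (apply sqrt_sqrt; lra).
  assert (E : sqrt (1 - t * t) = 2 / delta * sq).
  { apply sqrt_lem_1. nra. apply Rmult_le_pos; [|lra]. left; apply Rdiv_lt_0_compat; lra.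
    replace (2 / delta * sq * (2 / delta * sq)) with (4 / (delta * delta) * (sq * sq)) by (field; lra).
    rewrite Q2. unfold t. replace (2 * s / delta * (2 * s / delta)) with (4 * (s * s) / (delta * delta)) by (field; lra).
    rewrite S2. field. lra. }
  rewrite E.
  set (k := sqrt (c / b)). assert (K0 : 0 <= k) by apply sqrt_pos.
  assert (K2 : k * k = c / b) by (apply sqrt_sqrt; unfold Rdiv; apply Rmult_le_pos; [lra|left; apply Rinv_0_lt_compat; lra]).
  assert (KS : k * s = c).
  { assert (X : k * s * (k * s) = c * c).
    { replace (k * s * (k * s)) with ((k * k) * (s * s)) by ring. rewrite K2, S2. field. lra. }
    assert (0 <= k * s) by nra. nra. }
  unfold t. rewrite <- KS at 1.
  field. split; lra.
Qed.

Lemma r_facts b c delta : 0 <= b -> 0 <= c -> 0 < delta -> b * c < delta ^ 2 / 4 ->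
  0 <= c / (delta / 2 + sqrt (delta ^ 2 / 4 - b * c)) /\
  (c + c / (delta / 2 + sqrt (delta ^ 2 / 4 - b * c)) * (b * (c / (delta / 2 + sqrt (delta ^ 2 / 4 - b * c))))) / delta
    = c / (delta / 2 + sqrt (delta ^ 2 / 4 - b * c)) /\
  c / (delta / 2 + sqrt (delta ^ 2 / 4 - b * c)) * b < delta / 2.
Proof.
  intros Hb Hc Hd Hbc.
  set (sq := sqrt (delta ^ 2 / 4 - b * c)).
  assert (Q0 : 0 < sq) by (apply sqrt_lt_R0; lra).
  assert (Q2 : sq * sq = delta ^ 2 / 4 - b * c) by (apply sqrt_sqrt; lra).
  assert (Dp : 0 < delta / 2 + sq) by lra.
  split; [|split].
  - unfold Rdiv. apply Rmult_le_pos; [lra|left; apply Rinv_0_lt_compat; lra].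
  - field_simplify_eq; [|lra]. replace (sq ^ 2) with (sq * sq) by ring. rewrite Q2. field.
  - apply Rmult_lt_reg_r with (delta / 2 + sq); auto.
    replace (c / (delta / 2 + sq) * b * (delta / 2 + sq)) with (b * c) by (field; lra). nra.
Qed.


Lemma eq_of_small {H : HilbertSpace} (u v : H) :
  (forall eps, 0 < eps -> hnorm (hsub u v) <= eps) -> u = v.
Proof.
  intro E. assert (Z : hsub u v = hzero).
  { apply hnorm_le0. apply Rle_plus_epsilon. intros. rewrite Rplus_0_l. auto. }
  rewrite <- (subK _ u v), Z, hadd_0l. reflexivity.
Qed.

Lemma bnd_subC {H0 H1 : HilbertSpace} (f g : H0 -> H1) M :
  bnd (fun x => hsub (f x) (g x)) M -> bnd (fun x => hsub (g x) (f x)) M.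
Proof. intros Bd x. rewrite hnorm_subC. apply Bd. Qed.

Lemma bnd_mono {H0 H1 : HilbertSpace} (f : H0 -> H1) M N : M <= N -> bnd f M -> bnd f N.
Proof. intros L Bd x. eapply Rle_trans; [apply Bd|]. apply Rmult_le_compat_r; auto. apply hnorm_nonneg. Qed.

Section M.
Context {H0 H1 : HilbertSpace} (D0 : H0 -> Prop) (A0 : H0 -> H0) (D1 : H1 -> Prop) (A1 : H1 -> H1)
  (hA1 : closed_densely_defined D1 A1) (delta : R) (hdelta : 0 < delta)
  (hsyl : forall Y : H0 -> H1, bounded_op Y ->
     exists X : H0 -> H1,
       bounded_op X /\ sylvester_strong_sol D0 A0 D1 A1 Y X /\
       (forall X' : H0 -> H1, bounded_op X' -> sylvester_strong_sol D0 A0 D1 A1 Y X' ->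
          X' = X) /\
       opnorm X <= opnorm Y / delta)
  (B : H1 -> H0) (C : H0 -> H1) (hB : bounded_op B) (hC : bounded_op C).

Local Notation sylv := (sylvester_strong_sol D0 A0 D1 A1).

Lemma D1_sub u v : D1 u -> D1 v -> D1 (hsub u v).
Proof.
  destruct hA1 as [_ [Da [Ds _]]]. intros Hu Hv. unfold hsub. apply Da; auto.
  rewrite opp_scal. apply Ds; auto.
Qed.
Lemma A1_sub u v : D1 u -> D1 v -> A1 (hsub u v) = hsub (A1 u) (A1 v).
Proof.
  destruct hA1 as [_ [Da [Ds [La [Ls _]]]]]. intros Hu Hv. unfold hsub.
  rewrite La; [|auto|rewrite opp_scal; apply Ds; auto]. rewrite !opp_scal, Ls; auto.
Qed.

Lemma sylv_sub Y1 Y2 K1 K2 : sylv Y1 K1 -> sylv Y2 K2 ->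
  sylv (fun x => hsub (Y1 x) (Y2 x)) (fun x => hsub (K1 x) (K2 x)).
Proof.
  intros [D1K1 E1] [D2K2 E2]. split.
  - intros x Hx. apply D1_sub; auto.
  - intros x Hx. rewrite A1_sub by auto. rewrite subACA, E1, E2 by auto. reflexivity.
Qed.

Lemma diff_bnd Y1 Y2 K1 K2 M : bounded_op Y1 -> bounded_op Y2 -> bounded_op K1 -> bounded_op K2 ->
  sylv Y1 K1 -> sylv Y2 K2 -> 0 <= M -> bnd (fun x => hsub (Y1 x) (Y2 x)) M ->
  bnd (fun x => hsub (K1 x) (K2 x)) (M / delta).
Proof.
  intros BY1 BY2 BK1 BK2 S1 S2 HM Bd.
  destruct (hsyl _ (bounded_sub _ _ BY1 BY2)) as [X [BX [SX [UX NX]]]].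
  rewrite (UX _ (bounded_sub _ _ BK1 BK2) (sylv_sub _ _ _ _ S1 S2)).
  apply bnd_mono with (opnorm X); [|apply bnd_opnorm; auto].
  eapply Rle_trans; [apply NX|]. unfold Rdiv. apply Rmult_le_compat_r.
  left; apply Rinv_0_lt_compat; auto. apply opnorm_le; auto. apply bounded_sub; auto.
Qed.

Lemma quad_bnd (K K' : H0 -> H1) r1 r2 b e : bounded_op K -> bounded_op K' ->
  bnd K r1 -> bnd K' r2 -> bnd B b -> bnd (fun x => hsub (K' x) (K x)) e ->
  0 <= r2 -> 0 <= b -> 0 <= e ->
  bnd (fun x => hsub (K' (B (K' x))) (K (B (K x)))) ((r1 + r2) * b * e).
Proof.
  intros BK BK' Bd1 Bd2 Bb Be H2 Hb He x.
  eapply Rle_trans; [apply (hnorm_sub_tri _ _ (K' (B (K x))))|].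
  rewrite <- lin_sub, <- lin_sub by (apply hB || apply BK').
  pose proof (Bd2 (B (hsub (K' x) (K x)))) as T1.
  pose proof (Bb (hsub (K' x) (K x))) as T2. pose proof (Be x) as T3.
  pose proof (Be (B (K x))) as T4. pose proof (Bb (K x)) as T5. pose proof (Bd1 x) as T6.
  pose proof (hnorm_nonneg _ x). pose proof (hnorm_nonneg _ (K x)).
  pose proof (hnorm_nonneg _ (B (K x))). pose proof (hnorm_nonneg _ (hsub (K' x) (K x))).
  pose proof (hnorm_nonneg _ (B (hsub (K' x) (K x)))).
  assert (hnorm (K' (B (hsub (K' x) (K x)))) <= r2 * b * e * hnorm x).
  { eapply Rle_trans; [exact T1|]. rewrite !Rmult_assoc. apply Rmult_le_compat_l; auto.
    eapply Rle_trans; [exact T2|]. apply Rmult_le_compat_l; auto. }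
  assert (hnorm (hsub (K' (B (K x))) (K (B (K x)))) <= e * b * r1 * hnorm x).
  { eapply Rle_trans; [exact T4|]. rewrite !Rmult_assoc. apply Rmult_le_compat_l; auto.
    eapply Rle_trans; [exact T5|]. apply Rmult_le_compat_l; auto. }
  nra.
Qed.

Definition Yof (K : H0 -> H1) : H0 -> H1 := fun x => hsub (C x) (K (B (K x))).
Definition Ssol (Y : H0 -> H1) : H0 -> H1 :=
  epsilon (inhabits (fun _ => hzero)) (fun X => bounded_op X /\ sylv Y X /\ opnorm X <= opnorm Y / delta).

Lemma Ssol_spec Y : bounded_op Y -> bounded_op (Ssol Y) /\ sylv Y (Ssol Y) /\ opnorm (Ssol Y) <= opnorm Y / delta.
Proof.
  intro BY. unfold Ssol. apply epsilon_spec. destruct (hsyl Y BY) as [X [? [? [_ ?]]]]. exists X. auto.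
Qed.

Lemma Yof_bounded K : bounded_op K -> bounded_op (Yof K).
Proof. intro BK. apply bounded_sub; auto. apply bounded_comp; auto. apply bounded_comp; auto. Qed.

Lemma Yof_bnd K r : bounded_op K -> 0 <= r -> bnd K r -> bnd (Yof K) (opnorm C + r * (opnorm B * r)).
Proof.
  intros BK Hr Bd. apply bnd_sub. apply bnd_opnorm; auto.
  apply bnd_comp; auto. apply bnd_comp; auto. apply opnorm_nonneg; auto. apply bnd_opnorm; auto.
Qed.

Fixpoint Kseq (n : nat) : H0 -> H1 :=
  match n with O => fun _ => hzero | S n => Ssol (Yof (Kseq n)) end.

Context (r : R) (Hr0 : 0 <= r) (Hrfix : (opnorm C + r * (opnorm B * r)) / delta = r)
  (Hrq : r * opnorm B < delta / 2).

Definition qq := 2 * r * opnorm B / delta.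
Lemma qq_bounds : 0 <= qq < 1.
Proof.
  pose proof (opnorm_nonneg _ hB). unfold qq. split.
  - unfold Rdiv. apply Rmult_le_pos; [nra|left; apply Rinv_0_lt_compat; auto].
  - apply Rmult_lt_reg_r with delta; auto. unfold Rdiv. rewrite Rmult_assoc, Rinv_l by lra. nra.
Qed.
Definition En (n : nat) := qq ^ n * r / (1 - qq).
Lemma En_nonneg n : 0 <= En n.
Proof.
  pose proof qq_bounds. unfold En, Rdiv. apply Rmult_le_pos; [|left; apply Rinv_0_lt_compat; lra].
  apply Rmult_le_pos; auto. apply pow_le; lra.
Qed.
Lemma En_S n : En (S n) = qq * En n.
Proof. unfold En. simpl. field. pose proof qq_bounds. lra. Qed.

Lemma En_small M eps : 0 <= M -> 0 < eps -> exists N, forall n, (N <= n)%nat -> En n * M < eps.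
Proof.
  intros HM He. pose proof qq_bounds as [Q0 Q1].
  set (k := r * M / (1 - qq)).
  assert (K0 : 0 <= k) by (unfold k, Rdiv; apply Rmult_le_pos; [nra|left; apply Rinv_0_lt_compat; lra]).
  destruct (pow_lt_1_zero qq (ltac:(rewrite Rabs_pos_eq; lra)) (eps / (k + 1))) as [N HN].
  { apply Rdiv_lt_0_compat; lra. }
  exists N. intros n Hn. specialize (HN n Hn). rewrite Rabs_pos_eq in HN by (apply pow_le; lra).
  replace (En n * M) with (qq ^ n * k) by (unfold En, k; field; lra).
  assert (0 <= qq ^ n) by (apply pow_le; lra).
  apply Rmult_lt_compat_r with (r := k + 1) in HN; [|lra].
  unfold Rdiv in HN. rewrite Rmult_assoc, Rinv_l, Rmult_1_r in HN by lra. nra.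
Qed.

Lemma Kseq_ok n : bounded_op (Kseq n) /\ bnd (Kseq n) r.
Proof.
  induction n as [|n [IB IBd]]; simpl.
  - split. apply bounded_zero. intro x. rewrite hnorm_zero. pose proof (hnorm_nonneg _ x). nra.
  - destruct (Ssol_spec _ (Yof_bounded _ IB)) as [B1 [S1 N1]]. split; auto.
    apply bnd_mono with (opnorm (Ssol (Yof (Kseq n)))); [|apply bnd_opnorm; auto].
    eapply Rle_trans; [apply N1|]. rewrite <- Hrfix. unfold Rdiv.
    apply Rmult_le_compat_r. left; apply Rinv_0_lt_compat; auto.
    pose proof (opnorm_nonneg _ hB). pose proof (opnorm_nonneg _ hC).
    apply opnorm_le. apply Yof_bounded; auto. nra. apply Yof_bnd; auto.
Qed.

Lemma Kseq_sylv n : sylv (Yof (Kseq n)) (Kseq (S n)).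
Proof. simpl. apply Ssol_spec, Yof_bounded, Kseq_ok. Qed.

Lemma Yof_sub K1 K2 x : hsub (Yof K1 x) (Yof K2 x) = hsub (K2 (B (K2 x))) (K1 (B (K1 x))).
Proof. unfold Yof. apply subKr. Qed.

Lemma Kstep n : bnd (fun x => hsub (Kseq (S n) x) (Kseq n x)) (qq ^ n * r).
Proof.
  induction n as [|n IH].
  - simpl pow. apply bnd_ext with (Kseq 1).
    + intro x. simpl (Kseq 0). unfold hsub. rewrite opp0, addr0. reflexivity.
    + rewrite Rmult_1_l. apply Kseq_ok.
  - pose proof (opnorm_nonneg _ hB) as Hb. pose proof qq_bounds.
    assert (Hqn : 0 <= qq ^ n * r) by (apply Rmult_le_pos; auto; apply pow_le; lra).
    replace (qq ^ S n * r) with ((r + r) * opnorm B * (qq ^ n * r) / delta) by (unfold qq; simpl; field; lra).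
    destruct (Kseq_ok n) as [Bn Bdn]. destruct (Kseq_ok (S n)) as [Bn1 Bdn1]. destruct (Kseq_ok (S (S n))) as [Bn2 Bdn2].
    apply diff_bnd with (Yof (Kseq (S n))) (Yof (Kseq n)); auto using Yof_bounded, Kseq_sylv.
    apply Rmult_le_pos; [|auto]. nra.
    apply bnd_ext with (fun x => hsub (Kseq n (B (Kseq n x))) (Kseq (S n) (B (Kseq (S n) x)))).
    { intro x. symmetry. apply Yof_sub. }
    apply quad_bnd; auto. apply bnd_opnorm; auto. apply bnd_subC. exact IH.
Qed.

Lemma Kcauchy n k : bnd (fun x => hsub (Kseq (n + k) x) (Kseq n x)) (qq ^ n * r * (1 - qq ^ k) / (1 - qq)).
Proof.
  pose proof qq_bounds.
  induction k as [|k IH].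
  - intro x. rewrite Nat.add_0_r, subrr, hnorm_zero. simpl. replace (qq ^ n * r * (1 - 1) / (1 - qq)) with 0 by (field; lra).
    pose proof (hnorm_nonneg _ x). lra.
  - intro x. rewrite (sub_trans _ _ (Kseq (n + k) x)).
    eapply Rle_trans; [apply hnorm_tri|].
    rewrite Nat.add_succ_r. pose proof (Kstep (n + k) x) as T. pose proof (IH x) as T2.
    rewrite pow_add in T.
    replace (qq ^ n * r * (1 - qq ^ S k) / (1 - qq) * hnorm x) with
      (qq ^ n * qq ^ k * r * hnorm x + qq ^ n * r * (1 - qq ^ k) / (1 - qq) * hnorm x) by (simpl; field; lra).
    lra.
Qed.

Lemma Kc n m : (n <= m)%nat -> bnd (fun x => hsub (Kseq m x) (Kseq n x)) (En n).
Proof.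
  intro L. replace m with (n + (m - n))%nat by lia. apply bnd_mono with (qq ^ n * r * (1 - qq ^ (m - n)) / (1 - qq)).
  2: apply Kcauchy. pose proof qq_bounds. unfold En, Rdiv. apply Rmult_le_compat_r.
  left; apply Rinv_0_lt_compat; lra. assert (0 <= qq ^ (m - n)) by (apply pow_le; lra).
  assert (0 <= qq ^ n * r) by (apply Rmult_le_pos; auto; apply pow_le; lra). nra.
Qed.

Definition lim_prop (x : H0) (l : H1) : Prop :=
  forall eps, 0 < eps -> exists N, forall n, (N <= n)%nat -> hnorm (hsub (Kseq n x) l) < eps.

Lemma lim_ex x : exists l, lim_prop x l.
Proof.
  apply hcomplete. intros eps He.
  destruct (En_small (hnorm x) eps (hnorm_nonneg _ x) He) as [N HN]. exists N.
  intros m n Hm Hn. change (hnorm (hsub (Kseq m x) (Kseq n x)) < eps). destruct (Nat.le_ge_cases n m) as [L|L].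
  - eapply Rle_lt_trans; [apply (Kc n m L)|]. apply HN; auto.
  - rewrite hnorm_subC.
    eapply Rle_lt_trans; [apply (Kc m n L)|]. apply HN; auto.
Qed.

Definition Lop (x : H0) : H1 := epsilon (inhabits hzero) (lim_prop x).
Lemma Lop_lim x : lim_prop x (Lop x).
Proof. unfold Lop. apply epsilon_spec, lim_ex. Qed.

Lemma L_close n : forall x, hnorm (hsub (Kseq n x) (Lop x)) <= En n * hnorm x.
Proof.
  intro x. apply Rle_plus_epsilon. intros eps He.
  destruct (Lop_lim x eps He) as [N HN].
  eapply Rle_trans; [apply (hnorm_sub_tri _ _ (Kseq (max N n) x))|].
  rewrite hnorm_subC. pose proof (Kc n (max N n) (Nat.le_max_r _ _) x).
  pose proof (HN (max N n) (Nat.le_max_l _ _)). lra.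
Qed.

Lemma L_linear : linear_map Lop.
Proof.
  split.
  - intros x y. apply eq_of_small. intros eps He.
    set (M := hnorm (hadd x y) + (hnorm x + hnorm y)).
    assert (HM : 0 <= M) by (unfold M; pose proof (hnorm_nonneg _ x); pose proof (hnorm_nonneg _ y); pose proof (hnorm_nonneg _ (hadd x y)); lra).
    destruct (En_small M eps HM He) as [N HN]. specialize (HN N (le_n _)).
    eapply Rle_trans; [apply (hnorm_sub_tri _ _ (Kseq N (hadd x y)))|].
    rewrite (proj1 (proj1 (proj1 (Kseq_ok N)))), subDD.
    pose proof (L_close N (hadd x y)) as LC. rewrite hnorm_subC in LC. rewrite ?(proj1 (proj1 (proj1 (Kseq_ok N)))), ?(proj2 (proj1 (proj1 (Kseq_ok N)))) in LC.
    pose proof (hnorm_tri _ (hsub (Kseq N x) (Lop x)) (hsub (Kseq N y) (Lop y))).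
    pose proof (L_close N x). pose proof (L_close N y). unfold M in HN. nra.
  - intros a x. apply eq_of_small. intros eps He.
    set (sa := sqrt (Cre a * Cre a + Cim a * Cim a)). assert (0 <= sa) by apply sqrt_pos.
    set (M := hnorm (hscal a x) + sa * hnorm x).
    assert (HM : 0 <= M) by (unfold M; pose proof (hnorm_nonneg _ x); pose proof (hnorm_nonneg _ (hscal a x)); nra).
    destruct (En_small M eps HM He) as [N HN]. specialize (HN N (le_n _)).
    eapply Rle_trans; [apply (hnorm_sub_tri _ _ (Kseq N (hscal a x)))|].
    rewrite (proj2 (proj1 (proj1 (Kseq_ok N)))), <- scal_sub, hnorm_scal. fold sa.
    pose proof (L_close N (hscal a x)) as LC. rewrite hnorm_subC in LC. rewrite ?(proj1 (proj1 (proj1 (Kseq_ok N)))), ?(proj2 (proj1 (proj1 (Kseq_ok N)))) in LC.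
    pose proof (L_close N x). pose proof (En_nonneg N). unfold M in HN.
    assert (sa * hnorm (hsub (Kseq N x) (Lop x)) <= sa * (En N * hnorm x)) by (apply Rmult_le_compat_l; auto).
    nra.
Qed.

Lemma L_bnd : bnd Lop r.
Proof.
  intro x. apply Rle_plus_epsilon. intros eps He.
  destruct (En_small (hnorm x) eps (hnorm_nonneg _ x) He) as [N HN]. specialize (HN N (le_n _)).
  rewrite <- (subK _ (Lop x) (Kseq N x)). eapply Rle_trans; [apply hnorm_tri|].
  rewrite hnorm_subC. pose proof (L_close N x). pose proof (proj2 (Kseq_ok N) x). lra.
Qed.

Lemma L_bounded : bounded_op Lop.
Proof. apply bounded_of_bnd with r. apply L_linear. apply L_bnd. Qed.

Lemma L_sylv : sylv (Yof Lop) Lop.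
Proof.
  destruct (hsyl _ (Yof_bounded _ L_bounded)) as [X [BX [SX _]]].
  assert (E : Lop = X).
  { apply functional_extensionality. intro x. apply eq_of_small. intros eps He.
    pose proof (opnorm_nonneg _ hB) as Hb. pose proof qq_bounds.
    destruct (En_small (2 * hnorm x) eps ltac:(pose proof (hnorm_nonneg _ x); lra) He) as [N HN].
    specialize (HN (S N) (le_S _ _ (le_n _))).
    assert (Bd : bnd (fun x => hsub (Kseq (S N) x) (X x)) ((r + r) * opnorm B * En N / delta)).
    { destruct (Kseq_ok N) as [Bn Bdn]. destruct (Kseq_ok (S N)) as [Bn1 Bdn1].
      apply diff_bnd with (Yof (Kseq N)) (Yof Lop); auto using Yof_bounded, Kseq_sylv, L_bounded.
      pose proof (En_nonneg N). apply Rmult_le_pos; [nra|auto].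
      apply bnd_ext with (fun x => hsub (Lop (B (Lop x))) (Kseq N (B (Kseq N x)))).
      { intro y. symmetry. apply Yof_sub. }
      apply quad_bnd; auto using L_bounded, L_bnd. apply bnd_opnorm; auto.
      apply bnd_subC. intro y. apply L_close. apply En_nonneg. }
    replace ((r + r) * opnorm B * En N / delta) with (En (S N)) in Bd by (rewrite En_S; unfold qq; field; lra).
    eapply Rle_trans; [apply (hnorm_sub_tri _ _ (Kseq (S N) x))|].
    rewrite hnorm_subC. pose proof (L_close (S N) x). pose proof (Bd x). lra. }
  rewrite <- E in SX. exact SX.
Qed.

Lemma uniq_gen K K' r2 : bounded_op K -> bounded_op K' -> sylv (Yof K) K -> sylv (Yof K') K' ->
  bnd K r -> bnd K' r2 -> 0 <= r2 -> (r + r2) * opnorm B / delta < 1 -> K' = K.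
Proof.
  intros BK BK' SK SK' Bd Bd' Hr2 Ht.
  pose proof (opnorm_nonneg _ hB) as Hb.
  set (e := opnorm (fun x => hsub (K' x) (K x))).
  assert (He : 0 <= e) by (apply opnorm_nonneg, bounded_sub; auto).
  assert (Le : e <= (r2 + r) * opnorm B * e / delta).
  { apply opnorm_le. apply bounded_sub; auto.
    unfold Rdiv; apply Rmult_le_pos; [|left; apply Rinv_0_lt_compat; auto]. apply Rmult_le_pos; [|auto]. nra.
    apply diff_bnd with (Yof K') (Yof K); auto using Yof_bounded.
apply Rmult_le_pos; [apply Rmult_le_pos; lra|auto].
    apply bnd_ext with (fun x => hsub (K (B (K x))) (K' (B (K' x)))).
    { intro y. symmetry. apply Yof_sub. }
    apply quad_bnd; auto. apply bnd_opnorm; auto. apply bnd_subC. apply bnd_opnorm, bounded_sub; auto. }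
  assert (E0 : e <= 0).
  { replace ((r2 + r) * opnorm B * e / delta) with (((r + r2) * opnorm B / delta) * e) in Le by (field; lra). nra. }
  apply functional_extensionality. intro x. apply eq_of_small. intros eps He'.
  pose proof (bnd_opnorm _ (bounded_sub _ _ BK' BK) x). fold e in H. pose proof (hnorm_nonneg _ x). nra.
Qed.
End M.


Lemma addK {H : HilbertSpace} (u v : H) : hsub (hadd u v) v = u.
Proof. unfold hsub. rewrite <- hadd_assoc, addrN, addr0. reflexivity. Qed.

Lemma ric_sylv {H0 H1 : HilbertSpace} D0 A0 D1 A1 (B : H1 -> H0) (C : H0 -> H1) K :
  riccati_strong_sol D0 A0 D1 A1 B C K <-> sylvester_strong_sol D0 A0 D1 A1 (Yof B C K) K.
Proof.
  split; intros [HD HE]; split; auto; intros x Hx.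
  - unfold Yof. rewrite <- (HE x Hx), addK. reflexivity.
  - rewrite (HE x Hx). unfold Yof. apply subK.
Qed.

Theorem mainTheorem6 (H0 H1 : HilbertSpace)
  (D0 : H0 -> Prop) (A0 : H0 -> H0) (D1 : H1 -> Prop) (A1 : H1 -> H1)
  (hA0 : closed_densely_defined D0 A0) (hA1 : closed_densely_defined D1 A1)
  (delta : R) (hdelta : 0 < delta)
  (hsyl : forall Y : H0 -> H1, bounded_op Y ->
     exists X : H0 -> H1,
       bounded_op X /\ sylvester_strong_sol D0 A0 D1 A1 Y X /\
       (forall X' : H0 -> H1, bounded_op X' -> sylvester_strong_sol D0 A0 D1 A1 Y X' ->
          X' = X) /\
       opnorm X <= opnorm Y / delta)
  (B : H1 -> H0) (C : H0 -> H1) (hB : bounded_op B) (hC : bounded_op C)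
  (hBC : sqrt (opnorm B * opnorm C) < delta / 2) :
  exists K : H0 -> H1,
    bounded_op K /\
    ((forall y, B y = hzero) \/ opnorm K <= delta / (2 * opnorm B)) /\
    riccati_strong_sol D0 A0 D1 A1 B C K /\
    (forall K' : H0 -> H1, bounded_op K' ->
       ((forall y, B y = hzero) \/ opnorm K' <= delta / (2 * opnorm B)) ->
       riccati_strong_sol D0 A0 D1 A1 B C K' -> K' = K) /\
    opnorm K <= opnorm C / (delta / 2 + sqrt (delta ^ 2 / 4 - opnorm B * opnorm C)) /\
    (~ (forall y, B y = hzero) ->
       opnorm C / (delta / 2 + sqrt (delta ^ 2 / 4 - opnorm B * opnorm C))
       = sqrt (opnorm C / opnorm B) *
         tanh (arctanh (2 * sqrt (opnorm B * opnorm C) / delta) / 2)).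
Proof.
  pose proof (opnorm_nonneg _ hB) as Hb. pose proof (opnorm_nonneg _ hC) as Hc.
  assert (Hbc : opnorm B * opnorm C < delta ^ 2 / 4).
  { assert (0 <= opnorm B * opnorm C) by nra.
    pose proof (sqrt_sqrt _ H). pose proof (sqrt_pos (opnorm B * opnorm C)). nra. }
  destruct (r_facts (opnorm B) (opnorm C) delta Hb Hc hdelta Hbc) as [Hr0 [Hrfix Hrq]].
  set (r := opnorm C / (delta / 2 + sqrt (delta ^ 2 / 4 - opnorm B * opnorm C))) in *.
  set (L := Lop D0 A0 D1 A1 delta B C).
  pose proof (L_sylv D0 A0 D1 A1 hA1 delta hdelta hsyl B C hB hC r Hr0 Hrfix Hrq) as LS.
  pose proof (L_bounded D0 A0 D1 A1 hA1 delta hdelta hsyl B C hB hC r Hr0 Hrfix Hrq) as LB.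
  pose proof (L_bnd D0 A0 D1 A1 hA1 delta hdelta hsyl B C hB hC r Hr0 Hrfix Hrq) as LBd.
  fold L in LS, LB, LBd.
  assert (LN : opnorm L <= r) by (apply opnorm_le; auto).
  assert (Bpos : ~ (forall y, B y = hzero) -> 0 < opnorm B).
  { intro NB. apply not_all_ex_not in NB. destruct NB as [y Hy].
    destruct (Rle_lt_or_eq_dec 0 (opnorm B) Hb) as [|E]; auto. exfalso. apply Hy.
    apply hnorm_le0. pose proof (bnd_opnorm _ hB y). rewrite <- E in H. lra. }
  assert (B0 : (forall y, B y = hzero) -> opnorm B = 0).
  { intro Z. apply Rle_antisym; auto. apply opnorm_le; auto. lra. intro y. rewrite Z, hnorm_zero. lra. }
  exists L. split; [auto|]. split; [|split; [|split; [|split]]].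
  - destruct (classic (forall y, B y = hzero)) as [Z|NZ]; [left; auto|right].
    specialize (Bpos NZ). eapply Rle_trans; [exact LN|].
    apply Rmult_le_reg_r with (2 * opnorm B). lra.
    replace (delta / (2 * opnorm B) * (2 * opnorm B)) with delta by (field; lra). lra.
  - apply ric_sylv; auto.
  - intros K' BK' Ball RK'. apply ric_sylv in RK'.
    apply (uniq_gen D0 A0 D1 A1 hA1 delta hdelta hsyl B C hB hC r Hr0 L K' (opnorm K')); auto.
    apply bnd_opnorm; auto. apply opnorm_nonneg; auto.
    destruct (classic (forall y, B y = hzero)) as [Z|NZ].
    + rewrite (B0 Z). unfold Rdiv. rewrite Rmult_0_r, Rmult_0_l. lra.
    + specialize (Bpos NZ). destruct Ball as [Z|Ball]; [contradiction|].
      assert (opnorm K' * opnorm B <= delta / 2).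
      { apply Rmult_le_compat_r with (r := opnorm B) in Ball; auto.
        replace (delta / (2 * opnorm B) * opnorm B) with (delta / 2) in Ball by (field; lra). lra. }
      apply Rmult_lt_reg_r with delta; auto. unfold Rdiv.
      rewrite Rmult_assoc, Rinv_l, Rmult_1_r by lra. nra.
  - exact LN.
  - intro NZ. apply final_id; auto.
Qed.
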